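(* In the setting below, let $\mu=\alpha_1+\alpha_2+2\alpha_3+2\alpha_4+\alpha_5+\alpha_6$ and $\tau\mu=\alpha_1+\alpha_2+\alpha_3+2\alpha_4+2\alpha_5+\alpha_6$. Then $v=1\otimes e^{\mu}-1\otimes e^{\tau\mu}\in V^{\Lambda_0}$ is a highest weight vector of type $Vir(\tfrac45,\tfrac25)\otimes W^{\Omega_4}$, i.e. it satisfies (HW1)–(HW5) with $h=2/5$ and $\omega_j=\omega_4$.
   Context: Setting. $Q$ is the $E_6$ root lattice with simple roots $\alpha_1,\dots,\alpha_6$ (Dynkin chain $\alpha_1-\alpha_3-\alpha_4-\alpha_5-\alpha_6$, $\alpha_2$ attached to $\alpha_4$), form $\langle\cdot,\cdot\rangle$ from the Cartan matrix, fundamental weights $\lambda_i$, $P=\bigoplus\mathbb Z\lambda_i$, $\mathfrak h=\mathbb C\otimes P$. $\varepsilon:P\times P\to\{\pm1\}$ is bimultiplicative with $[\varepsilon(\lambda_i,\lambda_j)]$ rows $(1,1,1,1,1,1)$, $(-1,1,1,1,1,-1)$, $(-1,1,1,1,1,1)$, $(1,-1,1,1,1,1)$, $(1,1,1,1,1,-1)$, $(1,1,1,1,1,1)$. $V_P=S(\hat{\mathfrak h}^-)\otimes\mathbb C[P]$ with Heisenberg operators $h(n)$ ($[h(m),h'(n)]=m\langle h,h'\rangle\delta_{m+n,0}$, $h(n)1=0$ for $n>0$, $h(0)(u\otimes e^\beta)=\langle h,\beta\rangle u\otimes e^\beta$). For $\alpha\in Q$: $Y(1\otimes e^\alpha,z)=\exp(\sum_{k\ge1}\frac{\alpha(-k)}kz^k)\exp(-\sum_{k\ge1}\frac{\alpha(k)}kz^{-k})e_\alpha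 z^{\alpha(0)}=\sum_n\{1\otimes e^\alpha\}_nz^{-n-1}$, $e_\alpha(u\otimes e^\beta)=\varepsilon(\alpha,\beta)u\otimes e^{\alpha+\beta}$, $z^{\alpha(0)}(u\otimes e^\beta)=z^{\langle\alpha,\beta\rangle}u\otimes e^\beta$; $Y(h_1(-1)\cdots h_k(-1)\otimes e^\alpha,z)=\,:h_1(z)\cdots h_k(z)Y(1\otimes e^\alpha,z):$ with $h(z)=\sum_nh(n)z^{-n-1}$ (annihilators to the right). $V^{\Lambda_0}=S(\hat{\mathfrak h}^-)\otimes\mathbb C[Q]$. $\tau$: $\alpha_1\leftrightarrow\alpha_6$, $\alpha_3\leftrightarrow\alpha_5$; $\mathrm{Proj}(\nu)=(\nu+\tau\nu)/2$. $\theta=\alpha_1+2\alpha_2+2\alpha_3+3\alpha_4+2\alpha_5+\alpha_6$. Raising operators of $\tilde{\mathfrak a}$ (type $F_4^{(1)}$): $\{\beta_1\}_0=\{1\otimes e^{\alpha_2}\}_0$, $\{\beta_2\}_0=\{1\otimes e^{\alpha_4}\}_0$, $\{\beta_3\}_0=\{1\otimes e^{\alpha_3}\}_0+\{1\otimes e^{\alpha_5}\}_0$, $\{\beta_4\}_0=\{1\otimes e^{\alpha_1}\}_0+\{1\otimes e^{\alpha_6}\}_0$, and $\{1\otimes e^{-\theta}\}_1$. Coset conformal vector: $\omega=\frac1{10}[(-\lambda_1+\lambda_6)(-1)^2+(\lambda_3-\lambda_5)(-1)^2+(\lambda_1-\lambda_3+\lambda_5-\lambda_6)(-1)^2]\otimes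 e^0+\frac15(-1\otimes e^{\pm\gamma_1}-1\otimes e^{\pm\gamma_2}+1\otimes e^{\pm\gamma_3})$, $\gamma_1=\alpha_1-\alpha_6$, $\gamma_2=\alpha_3-\alpha_5$, $\gamma_3=\gamma_1+\gamma_2$, $1\otimes e^{\pm\gamma}:=1\otimes e^{\gamma}+1\otimes e^{-\gamma}$; $L(n)=\{\omega\}_{n+1}$ (Virasoro, central charge $4/5$, commuting with $\tilde{\mathfrak a}$). $\omega_4=\frac{\lambda_1+\lambda_6}2$; $\Omega_4$ is the level one $F_4^{(1)}$ weight with finite part $\omega_4$, $W^{\Omega_4}$ its irreducible module, $Vir(c,h)$ irreducible highest weight Virasoro modules. A nonzero $v\in V_P$ is a highest weight vector of type $Vir(\frac45,h)\otimes W^{\Omega_j}$ if (HW1) $\{1\otimes e^{-\theta}\}_1v=0$; (HW2) $\{\beta_i\}_0v=0$, $i=1,\dots,4$; (HW3) $L(1)v=L(2)v=0$; (HW4) $L(0)v=hv$; (HW5) $v\in\bigoplus_kS(\hat{\mathfrak h}^-)\otimes e^{\nu_k}$ with $\mathrm{Proj}(\nu_k)=\omega_j$. *)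

(* Defs.v *)
(* Lattice VOA V_P for the E6 weight lattice, modelled as the
   free algC-vector space (monoid algebra {malg algC[fkey]}) on the monomial
   basis  x^m (x) e^beta  of  S(h^-) (x) C[P]. *)
From HB Require Import structures.
From mathcomp Require Import all_boot all_order all_algebra all_field.
From mathcomp Require Import finmap.
From mathcomp.multinomials Require Import monalg.

Set Implicit Arguments.
Unset Strict Implicit.
Unset Printing Implicit Defensive.

Import Order.TTheory GRing.Theory Num.Theory.
Local Open Scope ring_scope.

(* Dynkin chain a1-a3-a4-a5-a6, a2 attached to a4 (0-indexed: 0-2-3-4-5, 1-3). *)
Definition e6_edge (i j : 'I_6) : bool :=
  ((i : nat), (j : nat)) \in [:: (0,2); (2,0); (2,3); (3,2); (3,4); (4,3);
                                 (4,5); (5,4); (1,3); (3,1)]%N.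

Definition cartan : 'M[int]_6 :=
  \matrix_(i, j) (if i == j then 2 else if e6_edge i j then -1 else 0).

(* Gram matrix of the fundamental weights: <lambda_i, lambda_j> = (A^-1)_ij. *)
Definition gramP : 'M[algC]_6 := invmx (map_mx intr cartan).

(* P = (+)_i Z lambda_i, elements given by their lambda-coordinates. *)
Definition lat := 'rV[int]_6.
(* h = C (x) P, elements given by their lambda-coordinates. *)
Definition hvec := 'rV[algC]_6.

Definition toh (b : lat) : hvec := map_mx intr b.
Definition form (x y : hvec) : algC := (x *m gramP *m y^T) 0 0.
Definition lam (j : 'I_6) : hvec := delta_mx 0 j.

(* the element of Q with alpha-coordinates c, in lambda-coordinates
   (alpha_i = sum_j A_ij lambda_j) *)
Definition rootQ (c : 'rV[int]_6) : lat := c *m cartan.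
Definition inQ (b : lat) : Prop := exists c : 'rV[int]_6, b = rootQ c.

Definition rowv (s : seq int) : 'rV[int]_6 := \row_(i < 6) nth 0 s i.

(* positions (0-indexed) where eps(lambda_i, lambda_j) = -1 *)
Definition eps_neg : seq (nat * nat) := [:: (1,0); (1,5); (2,0); (3,1); (4,5)]%N.

Definition eps (b c : lat) : algC :=
  (-1) ^ (\sum_(i < 6) \sum_(j < 6)
             (if ((i : nat), (j : nat)) \in eps_neg then b 0 i * c 0 j else 0)).

(* variable (j, k) stands for lambda_j(-(k+1)) *)
Definition fkey := ({cmonom ('I_6 * nat)%type} * lat)%type.
Definition VP := {malg algC[fkey]}.

Definition bas (m : {cmonom ('I_6 * nat)%type}) (b : lat) : VP := << (m, b) >>.
Definition vac (b : lat) : VP := bas (@onecm _) b.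

Definition lin (f : fkey -> VP) (v : VP) : VP :=
  \sum_(k <- msupp v) v@_k *: f k.

Definition wt (m : {cmonom ('I_6 * nat)%type}) : nat :=
  (\sum_(i <- finsupp m) m i * (i.2).+1)%N.

Definition heis_key (h : hvec) (n : int) (k : fkey) : VP :=
  let: (m, b) := k in
  match n with
  | Posz 0 => form h (toh b) *: bas m b
  | Posz n'.+1 =>
      \sum_(j < 6) ((n'.+1)%:R * form h (lam j) * (m (j, n'))%:R)
                     *: bas (divcm m (ucm (j, n'))) b
  | Negz n' => \sum_(j < 6) h 0 j *: bas (mulcm m (ucm (j, n'))) b
  end.
Definition heis (h : hvec) (n : int) : VP -> VP := lin (heis_key h n).

(* For commuting operators c_1, c_2, ..., the coefficient of x^a in
   exp(sum_{k>=1} c_k x^k) applied to v, i.e.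
   sum_{r<=a} 1/r! (sum_k c_k x^k)^r v  (higher r contribute nothing). *)
Definition Xmul (c : nat -> VP -> VP) (w : nat -> VP) : nat -> VP :=
  fun j => \sum_(1 <= k < j.+1) c k (w (j - k)%N).
Definition expcoef (c : nat -> VP -> VP) (a : nat) (v : VP) : VP :=
  \sum_(r < a.+1) (r`!%:R)^-1 *:
     iter r (Xmul c) (fun j => if j == 0%N then v else 0) a.

(* e_alpha z^{alpha(0)} on basis vectors (alpha given by alpha-coords c) *)
Definition Yexp_key (c : 'rV[int]_6) (n : int) (k : fkey) : VP :=
  let: (m, b) := k in
  let al := rootQ c in
  let p : int := (c *m b^T) 0 0 in                  (* <alpha, beta> *)
  let cminus := fun k u => (k%:R)^-1 *: heis (toh al) (- (k%:Z)) u in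
  let cplus := fun k u => - (k%:R)^-1 *: heis (toh al) (k%:Z) u in
  \sum_(bb < (wt m).+1)
     let a : int := - n - 1 - p + (bb%:Z) in
     if (0 <= a) then
       expcoef cminus `|a|%N (expcoef cplus bb (eps al b *: bas m (b + al)))
     else 0.
Definition Yexp (c : 'rV[int]_6) (n : int) : VP -> VP := lin (Yexp_key c n).

Definition nord (h : hvec) (j l : int) (u : VP) : VP :=
  if 0 < j then heis h l (heis h j u) else heis h j (heis h l u).
(* component {h(-1)^2 (x) e^0}_mm = sum_{j+l = mm-1} :h(j) h(l): ;
   on a basis vector only |j| <= wt + |mm| + 1 can contribute *)
Definition Yquad_key (h : hvec) (mm : int) (k : fkey) : VP :=
  let N := (wt k.1 + `|mm| + 1)%N in
  \sum_(t < (N + N).+1)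
     let j : int := (t%:Z) - (N%:Z) in nord h j (mm - 1 - j) (bas k.1 k.2).
Definition Yquad (h : hvec) (mm : int) : VP -> VP := lin (Yquad_key h mm).

(* ---------- coset Virasoro L(n) = {omega}_{n+1} ---------- *)
Definition hvr (s : seq algC) : hvec := \row_(i < 6) nth 0 s i.
Definition om_h1 : hvec := hvr [:: -1; 0; 0; 0; 0; 1].
Definition om_h2 : hvec := hvr [:: 0; 0; 1; 0; -1; 0].
Definition om_h3 : hvec := hvr [:: 1; 0; -1; 0; 1; -1].
Definition gam1 : 'rV[int]_6 := rowv [:: 1; 0; 0; 0; 0; -1].
Definition gam2 : 'rV[int]_6 := rowv [:: 0; 0; 1; 0; -1; 0].
Definition gam3 : 'rV[int]_6 := rowv [:: 1; 0; 1; 0; -1; -1].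

Definition Yexppm (c : 'rV[int]_6) (n : int) (v : VP) : VP :=
  Yexp c n v + Yexp (- c) n v.

Definition Lvir (n : int) (v : VP) : VP :=
  (10%:R)^-1 *: (Yquad om_h1 (n + 1) v + Yquad om_h2 (n + 1) v
                 + Yquad om_h3 (n + 1) v)
  + (5%:R)^-1 *: (- Yexppm gam1 (n + 1) v - Yexppm gam2 (n + 1) v
                  + Yexppm gam3 (n + 1) v).

Definition simple (i : 'I_6) : 'rV[int]_6 := delta_mx 0 i.
Definition a1 : 'I_6 := inord 0. Definition a2 : 'I_6 := inord 1.
Definition a3 : 'I_6 := inord 2. Definition a4 : 'I_6 := inord 3.
Definition a5 : 'I_6 := inord 4. Definition a6 : 'I_6 := inord 5.
Definition theta : 'rV[int]_6 := rowv [:: 1; 2; 2; 3; 2; 1].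

Definition tau_idx (i : 'I_6) : 'I_6 := inord (nth 0%N [:: 5; 1; 4; 3; 2; 0]%N i).
Definition tau_lat (b : lat) : lat := \row_i b 0 (tau_idx i).
Definition Proj (b : lat) : hvec := (2%:R)^-1 *: (toh b + toh (tau_lat b)).

Definition omega4 : hvec := hvr [:: 1/2; 0; 0; 0; 0; 1/2].

Definition hw_vector (hh : algC) (w : hvec) (v : VP) : Prop :=
  v <> 0 /\ [/\
      Yexp (- theta) 1 v = 0,
      [/\ Yexp (simple a2) 0 v = 0, Yexp (simple a4) 0 v = 0,
                    Yexp (simple a3) 0 v + Yexp (simple a5) 0 v = 0 &
                    Yexp (simple a1) 0 v + Yexp (simple a6) 0 v = 0],
      Lvir 1 v = 0 /\ Lvir 2 v = 0,
      Lvir 0 v = hh *: v &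
      forall k, k \in msupp v -> Proj k.2 = w].

(* V^{Lambda_0} = S(h^-) (x) C[Q] *)
Definition in_VQ (v : VP) : Prop := forall k, k \in msupp v -> inQ k.2.

Definition mu : 'rV[int]_6 := rowv [:: 1; 1; 2; 2; 1; 1].
Definition tau_mu : 'rV[int]_6 := rowv [:: 1; 1; 1; 2; 2; 1].

(* Main.v *)
Require Import Defs.
From HB Require Import structures.
From mathcomp Require Import all_boot all_order all_algebra all_field.
From mathcomp Require Import finmap.
From mathcomp.multinomials Require Import monalg.
Local Open Scope ring_scope.
From mathcomp Require Import ring zify.
Require Import Defs.
Set Implicit Arguments.
Unset Strict Implicit.
Unset Printing Implicit Defensive.
Import Order.TTheory GRing.Theory Num.Theory.
Local Open Scope ring_scope.

Lemma linE f (v : VP) (d : {fset fkey}) : (msupp v `<=` d)%fset ->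
  lin f v = \sum_(k <- d) v@_k *: f k.
Proof.
move=> s; rewrite /lin (big_fset_incl _ s) // => k _ /mcoeff_outdom ->.
by rewrite scale0r.
Qed.

Lemma linD f (x y : VP) : lin f (x + y) = lin f x + lin f y.
Proof.
rewrite (linE f (msuppD_le x y)).
rewrite (@linE f x (msupp x `|` msupp y)%fset (fsubsetUl _ _)).
rewrite (@linE f y (msupp x `|` msupp y)%fset (fsubsetUr _ _)) -big_split /=.
by apply: eq_bigr => k _; rewrite mcoeffD scalerDl.
Qed.

Lemma linZ f c (x : VP) : lin f (c *: x) = c *: lin f x.
Proof.
rewrite (linE f (msuppZ_le c x)) /lin scaler_sumr.
by apply: eq_bigr => k _; rewrite mcoeffZ scalerA.
Qed.

Lemma lin0 f : lin f 0 = 0.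
Proof. by rewrite /lin msupp0 big_seq_fset0. Qed.

Lemma linN f (x : VP) : lin f (- x) = - lin f x.
Proof. by rewrite -scaleN1r linZ scaleN1r. Qed.

Lemma linB f (x y : VP) : lin f (x - y) = lin f x - lin f y.
Proof. by rewrite linD linN. Qed.

Lemma lin_vac f b : lin f (vac b) = f (@onecm _, b).
Proof.
by rewrite /lin /vac /bas msuppU oner_eq0 big_seq_fset1 mcoeffUU scale1r.
Qed.

Lemma wt1 : wt (@onecm _) = 0%N.
Proof. by rewrite /wt mdom1 big_seq_fset0. Qed.

Ltac ordcase j := case: j => -[|[|[|[|[|[|//]]]]]] ?.

Lemma cartan_sym : cartan^T = cartan.
Proof.
apply/matrixP => i j; rewrite !mxE; ordcase i; ordcase j; by [].
Qed.

Definition Minv : 'M[int]_6 := \matrix_(i, j) nth 0 (nth [::] [:: [:: 4;3;5;6;4;2]; [::3;6;6;9;6;3];[::5;6;10;12;8;4];[::6;9;12;18;12;6];[::4;6;8;12;10;5];[::2;3;4;6;5;4]] i) j.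

Lemma cartan_Minv : cartan *m Minv = 3%:M.
Proof.
(apply/matrixP => i j; ordcase i; ordcase j; rewrite !(mxE, big_ord_recr, big_ord0) /=; vm_compute; reflexivity).
Qed.

Lemma cartan_unit : map_mx (intr : int -> algC) cartan \in unitmx.
Proof.
have H : map_mx (intr : int -> algC) cartan *m ((3%:R)^-1 *: map_mx intr Minv) = 1%:M.
  rewrite -scalemxAr -map_mxM cartan_Minv map_scalar_mx scale_scalar_mx /=.
  by rewrite mulVf // pnatr_eq0.
by case: (mulmx1_unit H).
Qed.

Lemma form_rootQ (h : hvec) (c : 'rV[int]_6) : form h (toh (rootQ c)) = (mulmx h (trmx (map_mx (intr : int -> algC) c))) 0 0.
Proof.
rewrite /form /toh /rootQ map_mxM trmx_mul !map_trmx cartan_sym !mulmxA.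
by rewrite -(mulmxA h) /gramP mulVmx ?cartan_unit // mulmx1.
Qed.

Lemma heis_vac_pos h (n : int) b : 0 < n -> heis h n (vac b) = 0.
Proof.
case: n => [[|n]|n] //= _; rewrite /heis lin_vac /=.
by apply: big1 => j _; rewrite onecmE mulr0 scale0r.
Qed.

Lemma heis_vac0 h b : heis h 0 (vac b) = form h (toh b) *: vac b.
Proof. by rewrite /heis lin_vac. Qed.

Lemma heis0 h n : heis h n 0 = 0.
Proof. exact: lin0. Qed.

Lemma nord_vac h (j l : int) b : 0 <= j + l ->
  nord h j l (vac b) = if (j == 0) && (l == 0) then form h (toh b) ^+ 2 *: vac b else 0.
Proof.
move=> Hjl; rewrite /nord; case: (ltrP 0 j) => Hj.
  by rewrite heis_vac_pos // heis0 (gt_eqF Hj).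
case: (ltrP 0 l) => Hl.
  by rewrite heis_vac_pos // heis0 (gt_eqF Hl) andbF.
have j0 : j = 0 by lia.
have l0 : l = 0 by lia.
rewrite j0 l0 eqxx /= heis_vac0 /heis linZ -/(heis h 0) heis_vac0 scalerA.
by rewrite expr2.
Qed.

Lemma Yquad_vac h (mm : int) b : 1 <= mm ->
  Yquad h mm (vac b) = if mm == 1 then form h (toh b) ^+ 2 *: vac b else 0.
Proof.
move=> Hmm; rewrite /Yquad lin_vac /Yquad_key /= wt1 add0n.
set N := (`|mm|%N + 1)%N.
set F := form h (toh b) ^+ 2 *: vac b.
rewrite (eq_bigr (fun t : 'I_(N+N).+1 =>
   if (t%:Z - N%:Z == 0) && (mm - 1 - (t%:Z - N%:Z) == 0) then F else 0)); last first.
  move=> t _; rewrite nord_vac //; lia.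
case: eqP => Hm.
  have HN : (N < (N + N).+1)%N by lia.
  rewrite (bigD1 (Ordinal HN)) //= big1 ?addr0.
    have -> : (N%:Z - N%:Z == 0) = true by apply/eqP; lia.
    by have -> : (mm - 1 - (N%:Z - N%:Z) == 0) = true by apply/eqP; lia.
  move=> t Ht; case: eqP => //= Ht2; exfalso; move/eqP: Ht; apply; apply: val_inj => /=; lia.
apply: big1 => t _; case: eqP => //= Ht; case: eqP => // H2; exfalso; lia.
Qed.

Lemma Yexp_vac_lt c (n : int) b : - n - 1 - (c *m b^T) 0 0 < 0 -> Yexp c n (vac b) = 0.
Proof.
move=> H; rewrite /Yexp lin_vac /Yexp_key wt1 big_ord1 /= addr0.
by rewrite leNgt H.
Qed.

Lemma Yexp_vac_eq c (n : int) b : - n - 1 - (c *m b^T) 0 0 = 0 ->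
  Yexp c n (vac b) = eps (rootQ c) b *: vac (b + rootQ c).
Proof.
move=> H; rewrite /Yexp lin_vac /Yexp_key wt1 big_ord1 /= addr0 H lexx /=.
by rewrite /expcoef !big_ord1 /= invr1 !scale1r.
Qed.

Lemma a1E : a1 = Ordinal (isT : (0 < 6)%N). Proof. by apply: val_inj; rewrite /= inordK. Qed.
Lemma a2E : a2 = Ordinal (isT : (1 < 6)%N). Proof. by apply: val_inj; rewrite /= inordK. Qed.
Lemma a3E : a3 = Ordinal (isT : (2 < 6)%N). Proof. by apply: val_inj; rewrite /= inordK. Qed.
Lemma a4E : a4 = Ordinal (isT : (3 < 6)%N). Proof. by apply: val_inj; rewrite /= inordK. Qed.
Lemma a5E : a5 = Ordinal (isT : (4 < 6)%N). Proof. by apply: val_inj; rewrite /= inordK. Qed.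
Lemma a6E : a6 = Ordinal (isT : (5 < 6)%N). Proof. by apply: val_inj; rewrite /= inordK. Qed.

HB.lock Definition B1 : lat := rowv [:: 0; 0; 1; 0; -1; 1].
HB.lock Definition B2 : lat := rowv [:: 1; 0; -1; 0; 1; 0].
Lemma B1E : B1 = rowv [:: 0; 0; 1; 0; -1; 1]. Proof. by rewrite B1.unlock. Qed.
Lemma B2E : B2 = rowv [:: 1; 0; -1; 0; 1; 0]. Proof. by rewrite B2.unlock. Qed.

Ltac cmp := rewrite /rootQ ?B1E ?B2E ?a1E ?a2E ?a3E ?a4E ?a5E ?a6E !(mxE, big_ord_recr, big_ord0) /=;
  vm_compute; reflexivity.
Ltac roweq := apply/matrixP; case => -[|//] ?; case => -[|[|[|[|[|[|//]]]]]] ?; cmp.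

Lemma muE : rootQ mu = B1. Proof. roweq. Qed.
Lemma tmuE : rootQ tau_mu = B2. Proof. roweq. Qed.
Lemma ra3E : rootQ (simple a3) = rowv [:: -1; 0; 2; -1; 0; 0]. Proof. roweq. Qed.
Lemma ra5E : rootQ (simple a5) = rowv [:: 0; 0; 0; -1; 2; -1]. Proof. roweq. Qed.
Lemma rg2E : rootQ gam2 = rowv [:: -1; 0; 2; 0; -2; 1]. Proof. roweq. Qed.
Lemma rNg2E : rootQ (- gam2) = rowv [:: 1; 0; -2; 0; 2; -1]. Proof. roweq. Qed.

Lemma sum1 : B1 + rowv [:: 0; 0; 0; -1; 2; -1] = B2 + rowv [:: -1; 0; 2; -1; 0; 0].
Proof. roweq. Qed.
Lemma sum2 : B1 + rowv [:: 1; 0; -2; 0; 2; -1] = B2. Proof. roweq. Qed.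
Lemma sum3 : B2 + rowv [:: -1; 0; 2; 0; -2; 1] = B1. Proof. roweq. Qed.

Ltac epsc := rewrite /eps; match goal with |- (-1) ^ ?z = 1 => have -> : z = 2 by cmp end;
  by rewrite -[2]/(Posz 2) /exprz sqrrN expr1n.

Lemma eps1 : eps (rowv [:: 0; 0; 0; -1; 2; -1]) B1 = 1. Proof. epsc. Qed.
Lemma eps2' : eps (rowv [:: -1; 0; 2; -1; 0; 0]) B2 = 1. Proof. epsc. Qed.
Lemma eps3 : eps (rowv [:: 1; 0; -2; 0; 2; -1]) B1 = 1. Proof. epsc. Qed.
Lemma eps4 : eps (rowv [:: -1; 0; 2; 0; -2; 1]) B2 = 1. Proof. epsc. Qed.

Lemma B12 : B1 != B2.
Proof. rewrite B1E B2E; apply/negP => /eqP /matrixP /(_ 0 ord0); rewrite !mxE /=; by []. Qed.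


Lemma YexpB c n (x y : VP) : Yexp c n (x - y) = Yexp c n x - Yexp c n y.
Proof. exact: linB. Qed.
Lemma YquadB h n (x y : VP) : Yquad h n (x - y) = Yquad h n x - Yquad h n y.
Proof. exact: linB. Qed.

Lemma Yquad_vac1 h b : Yquad h 1 (vac b) = form h (toh b) ^+ 2 *: vac b.
Proof. by rewrite Yquad_vac. Qed.
Lemma Yquad_vac2 h (mm : int) b : 2 <= mm -> Yquad h mm (vac b) = 0.
Proof. move=> H; rewrite Yquad_vac; last by lia. by case: eqP => // E; lia. Qed.

Lemma formE (s : seq int) (h : hvec) c : h = map_mx intr (rowv s) ->
  form h (toh (rootQ c)) = intr ((rowv s *m c^T) 0 0).
Proof. by move=> ->; rewrite form_rootQ map_trmx -map_mxM mxE. Qed.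

HB.lock Definition vacL (b : lat) : VP := vac b.
Lemma vacE b : vac b = vacL b. Proof. by rewrite vacL.unlock. Qed.

Lemma mcoeff_vacL k (b : lat) : (vacL b)@_k = ((@onecm ('I_6 * nat)%type, b) == k)%:R.
Proof. rewrite vacL.unlock /vac /bas (@mcoeffU fkey algC); reflexivity. Qed.

Lemma mcB (x y : VP) k : (x - y)@_k = x@_k - y@_k.
Proof. exact: mcoeffB. Qed.

Lemma supp_v k : k \in msupp (vacL B1 - vacL B2) ->
  k = (@onecm ('I_6 * nat)%type, B1) \/ k = (@onecm ('I_6 * nat)%type, B2).
Proof.
rewrite -mcoeff_neq0 mcB !mcoeff_vacL => H.
have [E|E] := boolP ((@onecm ('I_6 * nat)%type, B1) == k); first by left; rewrite (eqP E).
have [E'|E'] := boolP ((@onecm ('I_6 * nat)%type, B2) == k); first by right; rewrite (eqP E').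
by move: H; rewrite (negbTE E) (negbTE E') subrr eqxx.
Qed.

Lemma YexpL_lt c (n : int) b : - n - 1 - (c *m b^T) 0 0 < 0 -> Yexp c n (vacL b) = 0.
Proof. by rewrite -vacE; apply: Yexp_vac_lt. Qed.
Lemma YexpL_eq c (n : int) b : - n - 1 - (c *m b^T) 0 0 = 0 ->
  Yexp c n (vacL b) = eps (rootQ c) b *: vacL (b + rootQ c).
Proof. by rewrite -!vacE; apply: Yexp_vac_eq. Qed.
Lemma YquadL1 h b : Yquad h 1 (vacL b) = form h (toh b) ^+ 2 *: vacL b.
Proof. by rewrite -vacE Yquad_vac1. Qed.
Lemma YquadL2 h (mm : int) b : 2 <= mm -> Yquad h mm (vacL b) = 0.
Proof. by rewrite -vacE; apply: Yquad_vac2. Qed.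

Ltac hq := apply/matrixP; case => -[|//] ?; case => -[|[|[|[|[|[|//]]]]]] ?;
  rewrite !mxE /= ?rmorphN ?rmorph1 ?rmorph0 //.

Lemma om1 : om_h1 = map_mx intr (rowv [:: -1; 0; 0; 0; 0; 1]). Proof. hq. Qed.
Lemma om2 : om_h2 = map_mx intr (rowv [:: 0; 0; 1; 0; -1; 0]). Proof. hq. Qed.
Lemma om3 : om_h3 = map_mx intr (rowv [:: 1; 0; -1; 0; 1; -1]). Proof. hq. Qed.

Lemma fB11 : form om_h1 (toh B1) = 0.
Proof. by rewrite -muE (formE _ om1) (_ : (_ *m _) 0 0 = 0) ?rmorph0 //; cmp. Qed.
Lemma fB12 : form om_h2 (toh B1) = 1.
Proof. by rewrite -muE (formE _ om2) (_ : (_ *m _) 0 0 = 1) ?rmorph1 //; cmp. Qed.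
Lemma fB13 : form om_h3 (toh B1) = -1.
Proof. by rewrite -muE (formE _ om3) (_ : (_ *m _) 0 0 = -1) ?rmorphN ?rmorph1 //; cmp. Qed.
Lemma fB21 : form om_h1 (toh B2) = 0.
Proof. by rewrite -tmuE (formE _ om1) (_ : (_ *m _) 0 0 = 0) ?rmorph0 //; cmp. Qed.
Lemma fB22 : form om_h2 (toh B2) = -1.
Proof. by rewrite -tmuE (formE _ om2) (_ : (_ *m _) 0 0 = -1) ?rmorphN ?rmorph1 //; cmp. Qed.
Lemma fB23 : form om_h3 (toh B2) = 1.
Proof. by rewrite -tmuE (formE _ om3) (_ : (_ *m _) 0 0 = 1) ?rmorph1 //; cmp. Qed.

Lemma inord6 k (H : (k < 6)%N) : @inord 5 k = Ordinal H.
Proof. by apply: val_inj; rewrite /= inordK. Qed.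

Lemma tauB1 : B1 + tau_lat B1 = rowv [:: 1; 0; 0; 0; 0; 1].
Proof.
apply/matrixP; case => -[|//] ?; case => -[|[|[|[|[|[|//]]]]]] ?;
rewrite B1E !mxE /tau_idx /= ?(inord6 (isT : (5 < 6)%N)) ?(inord6 (isT : (4 < 6)%N))
  ?(inord6 (isT : (3 < 6)%N)) ?(inord6 (isT : (2 < 6)%N)) ?(inord6 (isT : (1 < 6)%N))
  ?(inord6 (isT : (0 < 6)%N)) ?mxE /=; vm_compute; reflexivity.
Qed.
Lemma tauB2 : B2 + tau_lat B2 = rowv [:: 1; 0; 0; 0; 0; 1].
Proof.
apply/matrixP; case => -[|//] ?; case => -[|[|[|[|[|[|//]]]]]] ?;
rewrite B2E !mxE /tau_idx /= ?(inord6 (isT : (5 < 6)%N)) ?(inord6 (isT : (4 < 6)%N))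
  ?(inord6 (isT : (3 < 6)%N)) ?(inord6 (isT : (2 < 6)%N)) ?(inord6 (isT : (1 < 6)%N))
  ?(inord6 (isT : (0 < 6)%N)) ?mxE /=; vm_compute; reflexivity.
Qed.

Lemma Proj_om b : b + tau_lat b = rowv [:: 1; 0; 0; 0; 0; 1] -> Proj b = omega4.
Proof.
move=> E; rewrite /Proj /toh -map_mxD E.
apply/matrixP; case => -[|//] ?; case => -[|[|[|[|[|[|//]]]]]] ?;
rewrite !mxE /= ?rmorph1 ?rmorph0 ?mulr0 ?mulr1 ?div1r //.
Qed.


Lemma modid (V : lmodType algC) (x y : V) :
  10%:R^-1 *:
  (0 ^+ 2 *: x - 0 ^+ 2 *: y + (1 ^+ 2 *: x - (-1) ^+ 2 *: y) +
   ((-1) ^+ 2 *: x - 1 ^+ 2 *: y)) +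
  5%:R^-1 *:
  (- (0 - 0 + (0 - 0)) - (0 - 1 *: x + (1 *: y - 0)) + (0 - 0 + (0 - 0))) =
  (2%:R / 5%:R) *: (x - y).
Proof.
rewrite expr0n /= !scale0r sqrrN expr1n !scale1r !subrr !addr0 !oppr0 !sub0r ?add0r ?addr0.
rewrite opprD opprK -/(x - y) scalerDr -!scalerDl.
congr (_ *: _).
field. all: by [].
Qed.

Theorem lemma6p2 :
  let v := vac (rootQ mu) - vac (rootQ tau_mu) in
  in_VQ v /\ hw_vector (2%:R / 5%:R) omega4 v.
Proof.
move=> v; rewrite /v muE tmuE !vacE.
split.
  move=> k /supp_v [->|->] /=; [exists mu | exists tau_mu]; by rewrite ?muE ?tmuE.
split.
  move/(congr1 (mcoeff (@onecm ('I_6 * nat)%type, B1))).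
  rewrite mcB !mcoeff_vacL eqxx /= mcoeff0.
  rewrite (_ : ((@onecm ('I_6 * nat)%type, B2) == (@onecm ('I_6 * nat)%type, B1)) = false).
    by rewrite subr0; apply/eqP; rewrite oner_eq0.
  by apply/negbTE; rewrite xpair_eqE eqxx /= eq_sym B12.
split.
- by rewrite YexpB !YexpL_lt ?subrr //; cmp.
- split.
  + by rewrite YexpB !YexpL_lt ?subrr //; cmp.
  + by rewrite YexpB !YexpL_lt ?subrr //; cmp.
  + rewrite !YexpB (@YexpL_lt (simple a3) 0 B1); last by cmp.
    rewrite (@YexpL_eq (simple a3) 0 B2); last by cmp.
    rewrite (@YexpL_eq (simple a5) 0 B1); last by cmp.
    rewrite (@YexpL_lt (simple a5) 0 B2); last by cmp.
    rewrite ra3E ra5E eps1 eps2' sum1.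
    by rewrite sub0r subr0 addNr.
  + by rewrite !YexpB !YexpL_lt ?subrr ?addr0 //; cmp.
- split.
  + rewrite /Lvir /Yexppm !YquadB !YexpB !YquadL2 //.
    rewrite !YexpL_lt; try by cmp.
    by rewrite !(subrr, addr0, oppr0, scaler0, subr0).
  + rewrite /Lvir /Yexppm !YquadB !YexpB !YquadL2 //.
    rewrite !YexpL_lt; try by cmp.
    by rewrite !(subrr, addr0, oppr0, scaler0, subr0).
- rewrite /Lvir /Yexppm !YquadB !YexpB add0r !YquadL1.
  rewrite (@YexpL_eq (- gam2) 1 B1); last by cmp.
  rewrite (@YexpL_eq gam2 1 B2); last by cmp.
  rewrite !YexpL_lt; try by cmp.
  rewrite rNg2E rg2E eps3 eps4 sum2 sum3 fB11 fB12 fB13 fB21 fB22 fB23.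
  move: (vacL B1) (vacL B2) => x y.
  exact: modid.
- move=> k /supp_v [->|->] /=; apply: Proj_om; [exact: tauB1 | exact: tauB2].
Qed.
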